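(* Every H\''older set $X\subseteq\mathbb{R}^d$ is simple, i.e. each $x\in X$ has a basis of neighborhoods $\mathscr U$ such that $U\cap\mathrm{int}(X)$ is connected for all $U\in\mathscr U$.
   Context: For $0<\alpha\le1$, $r,h>0$ let $\Gamma^\alpha_d(r,h)=\{(x',x_d)\in\mathbb{R}^{d-1}\times\mathbb{R}: |x'|<r,\ h(|x'|/r)^\alpha<x_d<h\}$. An open $U$ has the uniform cusp property of index $\alpha$ if for every $x\in\partial U$ there are $\epsilon>0$, some $\Gamma=\Gamma^\alpha_d(r,h)$ and $A\in O(d)$ with $y+A\Gamma\subseteq U$ for all $y\in\overline U\cap B(x,\epsilon)$. A H\''older set is a closed set $X$ with $X=\overline{\mathrm{int}(X)}\ne\emptyset$ such that $\mathrm{int}(X)$ has the uniform cusp property of some index $\alpha\in(0,1]$. *)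

(* Defs.v *)
(* Points of R^d are row vectors 'rV[R]_d with
   d = n.+1 (so d >= 1); the last coordinate (index ord_max) is x_d and the
   first n coordinates form x'. *)
From HB Require Import structures.
From mathcomp Require Import all_boot all_order all_algebra.
From mathcomp Require Import all_classical all_reals all_analysis.
Set Implicit Arguments. Unset Strict Implicit. Unset Printing Implicit Defensive.
Import Order.TTheory GRing.Theory Num.Theory.
Import numFieldNormedType.Exports.
Local Open Scope classical_set_scope.
Local Open Scope ring_scope.

Definition enorm (R : realType) (k : nat) (x : 'rV[R]_k) : R :=
  Num.sqrt (\sum_(i < k) x ord0 i ^+ 2).

Definition eball (R : realType) (k : nat) (x : 'rV[R]_k) (eps : R) : set 'rV[R]_k :=
  [set y | enorm (y - x) < eps].

Definition xprime (R : realType) (n : nat) (x : 'rV[R]_n.+1) : 'rV[R]_n :=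
  \row_(i < n) x ord0 (widen_ord (leqnSn n) i).

Definition xlast (R : realType) (n : nat) (x : 'rV[R]_n.+1) : R := x ord0 ord_max.

Definition cusp (R : realType) (n : nat) (alpha r h : R) : set 'rV[R]_n.+1 :=
  [set x | enorm (xprime x) < r /\
           h * (enorm (xprime x) / r) `^ alpha < xlast x /\ xlast x < h].

Definition orthogonal_mx (R : realType) (k : nat) (A : 'M[R]_k) : Prop :=
  A^T *m A = 1%:M.

(* A acting on (row) vector z : the usual A z, written z *m A^T *)
Definition act_mx (R : realType) (k : nat) (A : 'M[R]_k) (z : 'rV[R]_k) : 'rV[R]_k :=
  z *m A^T.

Definition boundary (R : realType) (k : nat) (U : set 'rV[R]_k) : set 'rV[R]_k :=
  closure U `\` interior U.

Definition uniform_cusp_property (R : realType) (n : nat) (alpha : R)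
    (U : set 'rV[R]_n.+1) : Prop :=
  forall x, boundary U x ->
    exists eps r h : R, [/\ 0 < eps, 0 < r & 0 < h] /\
    exists A : 'M[R]_n.+1, orthogonal_mx A /\
      forall y, (closure U `&` eball x eps) y ->
        [set y + act_mx A z | z in @cusp R n alpha r h] `<=` U.

Definition holder_set (R : realType) (n : nat) (X : set 'rV[R]_n.+1) : Prop :=
  [/\ closed X, X = closure (interior X), X != set0 &
      exists alpha : R, 0 < alpha <= 1 /\ @uniform_cusp_property R n alpha (interior X)].

Definition simple_set (R : realType) (k : nat) (X : set 'rV[R]_k) : Prop :=
  forall x, X x ->
    exists B : set (set 'rV[R]_k),
      [/\ (forall U, B U -> nbhs x U),
          (forall W, nbhs x W -> exists2 U, B U & U `<=` W) &
          (forall U, B U -> connected (U `&` interior X))].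

(* Main.v *)
Require Import Defs.
From HB Require Import structures.
From mathcomp Require Import all_boot all_order all_algebra.
From mathcomp Require Import all_classical all_reals all_analysis.
From mathcomp Require Import ring lra.
Import Order.TTheory GRing.Theory Num.Theory.
Import numFieldNormedType.Exports.
Local Open Scope classical_set_scope.
Local Open Scope ring_scope.
Set Implicit Arguments. Unset Strict Implicit. Unset Printing Implicit Defensive.

Definition seg (R : realType) k (a b : 'rV[R]_k) : set 'rV[R]_k :=
  [set a + l *: (b - a) | l in `[0, 1]%classic].

Lemma seg_connected (R : realType) k (a b : 'rV[R]_k) : connected (seg a b).
Proof.
apply: connected_continuous_connected; first exact: segment_connected.
apply: continuous_subspaceT => z.
apply: (@continuousD R _ R (fun _ => a) (fun l : R => l *: (b-a)) z).
exact: cst_continuous.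
exact: continuousZr_tmp.
Qed.

Lemma ballE (R : realType) k (x y : 'rV[R]_k) e : ball x e y <-> (0 < e /\ forall i j, `|x i j - y i j| < e).
Proof.
rewrite /ball /=. split => -[e0 H]; split => // i j; move: (H i j); by rewrite /ball /=.
Qed.

Lemma star_connected (T : topologicalType) (S : set T) c :
  (forall p, S p -> exists K, [/\ connected K, K `<=` S, K p & K c]) -> connected S.
Proof.
move=> H.
have H' : forall p, exists K : set T, S p -> [/\ connected K, K `<=` S, K p & K c].
  move=> p; have [Sp|nSp] := pselect (S p).
    by have [K HK] := H p Sp; exists K.
  by exists set0.
have [f Hf] := choice H'.
have -> : S = \bigcup_(p in S) f p.
  apply/seteqP; split => [p Sp|p [q Sq fqp]].
    by exists p => //; have [] := Hf p Sp.
  by have [_ sub _ _] := Hf q Sq; exact: sub.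
apply: bigcup_connected.
  by exists c => p Sp; have [] := Hf p Sp.
by move=> p Sp; have [] := Hf p Sp.
Qed.

Lemma sum_sq_mx (R : realType) k (u : 'rV[R]_k) :
  \sum_(i < k) u ord0 i ^+ 2 = (u *m u^T) ord0 ord0.
Proof. by rewrite !mxE; apply: eq_bigr => i _; rewrite mxE expr2. Qed.

Lemma enorm_act (R : realType) k (A : 'M[R]_k) (v : 'rV[R]_k) :
  orthogonal_mx A -> enorm (act_mx A v) = enorm v.
Proof.
move=> oA; rewrite /enorm /act_mx !sum_sq_mx.
by rewrite trmx_mul trmxK -mulmxA (mulmxA A^T) oA mul1mx.
Qed.

Lemma orthogonal_tr (R : realType) k (A : 'M[R]_k) :
  orthogonal_mx A -> orthogonal_mx A^T.
Proof. by rewrite /orthogonal_mx trmxK => /mulmx1C. Qed.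

Lemma enorm_ge0 (R : realType) k (v : 'rV[R]_k) : 0 <= enorm v.
Proof. exact: sqrtr_ge0. Qed.

Lemma enorm0 (R : realType) k : enorm (0 : 'rV[R]_k) = 0.
Proof. by rewrite /enorm big1 ?sqrtr0 // => i _; rewrite mxE expr0n. Qed.

Lemma coord_le_enorm (R : realType) k (v : 'rV[R]_k) j : `|v ord0 j| <= enorm v.
Proof.
rewrite /enorm -sqrtr_sqr ler_sqrt ?sumr_ge0 // => [|i _]; last exact: sqr_ge0.
rewrite (bigD1 j) //= lerDl sumr_ge0 // => i _; exact: sqr_ge0.
Qed.

Lemma enorm_le (R : realType) k (v : 'rV[R]_k) (M : R) : 0 <= M ->
  (forall j, `|v ord0 j| <= M) -> enorm v <= k%:R * M.
Proof.
move=> M0 H; rewrite /enorm -(@ger0_norm _ (k%:R * M)) ?mulr_ge0 // -sqrtr_sqr.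
rewrite ler_sqrt; last by rewrite sqr_ge0.
apply: (@le_trans _ _ (\sum_(i < k) M ^+ 2)).
  apply: ler_sum => i _; rewrite -real_normK ?num_real //.
  by rewrite lerXn2r ?nnegrE ?normr_ge0.
rewrite sumr_const card_ord exprMn mulrC -[M ^+ 2 *+ k]mulr_natr.
apply: ler_wpM2l; first exact: sqr_ge0.
case: k {v H} => [|k]; first by rewrite expr0n.
by rewrite expr2 -natrM ler_nat leq_pmull.
Qed.

Definition ed (R : realType) n : 'rV[R]_n.+1 := \row_j ((j == ord_max)%:R).

Lemma xprime_ed (R : realType) n (s : R) : xprime (s *: ed R n) = 0.
Proof.
apply/rowP => i; rewrite !mxE.
have -> : (widen_ord (leqnSn n) i == ord_max) = false.
  by apply/negbTE; rewrite -val_eqE /= neq_ltn ltn_ord.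
by rewrite mulr0.
Qed.

Lemma xlast_ed (R : realType) n (s : R) : xlast (s *: ed R n) = s.
Proof. by rewrite /xlast !mxE eqxx mulr1. Qed.

Lemma cusp_vert (R : realType) n (alpha r h s : R) :
  0 < alpha -> 0 < r -> 0 < s -> s < h -> @cusp R n alpha r h (s *: ed R n).
Proof.
move=> a0 r0 s0 sh; rewrite /cusp /= xprime_ed enorm0 xlast_ed mul0r powR0 ?gt_eqF //.
by rewrite mulr0; split.
Qed.

Lemma cusp_top (R : realType) n (alpha r h t d : R) (w : 'rV[R]_n.+1) :
  0 < alpha -> 0 < r -> 0 < h -> 0 < t -> t < h -> 0 <= d ->
  n.+1%:R * d < r -> n.+1%:R * d / r <= (t / (2 * h)) `^ alpha^-1 ->
  xlast w = t -> (forall j, j != ord_max -> `|w ord0 j| <= d) ->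
  @cusp R n alpha r h w.
Proof.
move=> a0 r0 h0 t0 th d0 dr dM wt wj.
have E0 := enorm_ge0 (xprime w).
have En : enorm (xprime w) <= n.+1%:R * d.
  apply: (le_trans (enorm_le d0 _)).
    move=> j; rewrite mxE; apply: wj.
    by rewrite -val_eqE /= neq_ltn ltn_ord.
  by rewrite ler_wpM2r // ler_nat.
rewrite /cusp /=; split; first exact: le_lt_trans En dr.
rewrite wt; split => //.
have H1 : (enorm (xprime w) / r) `^ alpha <= (t / (2 * h)).
  apply: (@le_trans _ _ ((n.+1%:R * d / r) `^ alpha)).
    apply: ge0_ler_powR; first exact: ltW.
    - by rewrite nnegrE divr_ge0 // ltW.
    - by rewrite nnegrE divr_ge0 ?mulr_ge0 // ltW.
    - by rewrite ler_pdivrMr // divfK ?gt_eqF.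
  apply: (@le_trans _ _ (((t / (2 * h)) `^ alpha^-1) `^ alpha)).
    apply: ge0_ler_powR; first exact: ltW.
    - by rewrite nnegrE divr_ge0 ?mulr_ge0 // ltW.
    - by rewrite nnegrE powR_ge0.
    - by [].
  rewrite -powRrM mulVf ?gt_eqF // powRr1 // divr_ge0 ?mulr_ge0 ?ltW //.
apply: (@le_lt_trans _ _ (h * (t / (2 * h)))).
  by rewrite ler_pM2l.
have -> : h * (t / (2 * h)) = t / 2 by field; rewrite gt_eqF.
lra.
Qed.

Definition sg (R : realType) k (a d : 'rV[R]_k) : set 'rV[R]_k :=
  [set a + l *: d | l in `[0, 1]%classic].

Lemma sg_connected (R : realType) k (a d : 'rV[R]_k) : connected (sg a d).
Proof.
apply: connected_continuous_connected; first exact: segment_connected.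
apply: continuous_subspaceT => z.
apply: (@continuousD R _ R (fun _ => a) (fun l : R => l *: d) z).
exact: cst_continuous.
exact: continuousZr_tmp.
Qed.

Lemma sg_a (R : realType) k (a d : 'rV[R]_k) : sg a d a.
Proof. by exists 0; [rewrite /= in_itv /= lexx ler01 | rewrite scale0r addr0]. Qed.

Lemma sg_b (R : realType) k (a d : 'rV[R]_k) : sg a d (a + d).
Proof. by exists 1; [rewrite /= in_itv /= lexx ler01 | rewrite scale1r]. Qed.

Lemma interior_case (R : realType) n (X : set 'rV[R]_n.+1) x :
  interior X x ->
  exists B : set (set 'rV[R]_n.+1),
      [/\ (forall U, B U -> nbhs x U),
          (forall W, nbhs x W -> exists2 U, B U & U `<=` W) &
          (forall U, B U -> connected (U `&` interior X))].
Proof.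
move=> xi.
exists [set ball x e | e in [set e | 0 < e /\ ball x e `<=` interior X]]; split.
- by move=> U [e [e0 _] <-]; exact: nbhsx_ballx.
- move=> W nW.
  have : nbhs x (W `&` interior X) by apply: filterI => //; exact: nbhs_interior.
  move=> /nbhs_ballP [e e0 sub].
  exists (ball x e); first by exists e => //; split => // y /sub [].
  by move=> y /sub [].
- move=> U [e [e0 sub] <-].
  rewrite setIidl //.
  apply: (@star_connected _ _ x) => p bp.
  exists (sg p (x - p)); split.
  + exact: sg_connected.
  + move=> z [l]; rewrite /= in_itv /= => /andP[l0 l1] <-.
    move/ballE: bp => [_ bp]; apply/ballE; split => // i j.
    move: (bp i j); rewrite !mxE.
    have -> : x i j - (p i j + l * (x i j - p i j)) = (1 - l) * (x i j - p i j) by ring.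
    rewrite normrM ger0_norm ?subr_ge0 // => H.
    apply: le_lt_trans H; rewrite ler_piMl ?normr_ge0 //.
    by rewrite lerBlDr lerDl.
  + exact: sg_a.
  + by have := sg_b p (x - p); rewrite addrCA subrr addr0.
Qed.

Lemma act_add (R : realType) k (A : 'M[R]_k) a b :
  act_mx A (a + b) = act_mx A a + act_mx A b.
Proof. by rewrite /act_mx mulmxDl. Qed.

Lemma act_scale (R : realType) k (A : 'M[R]_k) (l : R) a :
  l *: act_mx A a = act_mx A (l *: a).
Proof. by rewrite /act_mx scalemxAl. Qed.

Lemma act0 (R : realType) k (A : 'M[R]_k) : act_mx A 0 = 0.
Proof. by rewrite /act_mx mul0mx. Qed.

Lemma rot_pE (R : realType) k (A : 'M[R]_k) (x p : 'rV[R]_k) :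
  orthogonal_mx A -> p = x + act_mx A ((p - x) *m A).
Proof.
move=> oA; rewrite /act_mx -mulmxA (mulmx1C oA) mulmx1.
by rewrite addrCA subrr addr0.
Qed.

Lemma rot_coord (R : realType) k (A : 'M[R]_k) (x p w : 'rV[R]_k) :
  orthogonal_mx A -> ((p + act_mx A w) - x) *m A = (p - x) *m A + w.
Proof. by move=> oA; rewrite addrAC mulmxDl /act_mx -mulmxA oA mulmx1. Qed.

Lemma rot_enorm (R : realType) k (A : 'M[R]_k) (z : 'rV[R]_k) :
  orthogonal_mx A -> enorm (z *m A) = enorm z.
Proof.
move=> oA; have := enorm_act z (orthogonal_tr oA).
by rewrite /act_mx trmxK.
Qed.

Lemma boundary_case (R : realType) n (X : set 'rV[R]_n.+1) x (alpha : R) :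
  X = closure (interior X) -> X x -> ~ interior X x -> 0 < alpha ->
  uniform_cusp_property alpha (interior X) ->
  exists B : set (set 'rV[R]_n.+1),
      [/\ (forall U, B U -> nbhs x U),
          (forall W, nbhs x W -> exists2 U, B U & U `<=` W) &
          (forall U, B U -> connected (U `&` interior X))].
Proof.
move=> XE Xx nix a0 ucp.
have ii : interior (interior X) = interior X.
  by apply/interior_id; exact: open_interior.
have bx : boundary (interior X) x by split; [rewrite -XE | rewrite ii].
have [eps [r [h [[e0 r0 h0] [A [oA Hc]]]]]] := ucp x bx.
pose e := ed R n.
have [k kE] : exists k : R, k = n.+1%:R by eexists.
have k1 : 1 <= k by rewrite kE ler1n.
have k0 : 0 < k by lra.
pose M t := (t / (2 * h)) `^ alpha^-1.
pose dl t := Num.min (Num.min (r / (2 * k)) (r * M t / k)) t.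
pose C t (v : 'rV[R]_n.+1) := (forall j, j != ord_max -> `|v ord0 j| < dl t) /\
   (- dl t < v ord0 ord_max /\ v ord0 ord_max <= t).
pose S t := [set p | C t ((p - x) *m A)].
pose T := [set t | 0 < t /\ 2 * t < h /\ k * t < eps].
have dl_facts : forall t, 0 < t ->
    [/\ 0 < dl t, dl t <= t, k * dl t < r & k * dl t / r <= M t].
  move=> t t0.
  have M0 : 0 < M t by apply: powR_gt0; apply: divr_gt0 => //; lra.
  have d1 : dl t <= r / (2 * k) by rewrite /dl !ge_min lexx.
  have d2 : dl t <= r * M t / k by rewrite /dl !ge_min lexx orbT.
  split.
  - rewrite /dl !lt_min t0 andbT; apply/andP; split; apply: divr_gt0 => //.
      lra.
    exact: mulr_gt0.
  - by rewrite /dl ge_min lexx orbT.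
  - have := ler_wpM2l (ltW k0) d1.
    have -> : k * (r / (2 * k)) = r / 2.
      by field; rewrite gt_eqF.
    lra.
  - have ri : 0 <= r^-1 by rewrite invr_ge0 ltW.
    have := ler_wpM2r ri (ler_wpM2l (ltW k0) d2).
    have gen : forall m : R, k * (r * m / k) / r = m.
      by move=> m; field; rewrite !gt_eqF.
    by rewrite gen.
have vbound : forall t v, 0 < t -> C t v -> enorm v <= k * t.
  move=> t v t0 [Cj [Cl Cu]]; have [d0 dt _ _] := dl_facts t t0.
  rewrite kE; apply: enorm_le; first exact: ltW.
  move=> j; case: (eqVneq j ord_max) => [->|jn].
    rewrite ler_norml; apply/andP; split => //; lra.
  exact: ltW (lt_le_trans (Cj j jn) dt).
exists [set S t | t in T]; split.
- move=> U [t [t0 [t2h teps]] <-]; apply/nbhs_ballP.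
  have [d0 dt dr dM] := dl_facts t t0.
  exists (dl t / (2 * k)); first by apply: divr_gt0 => //; lra.
  move=> p /ballE [_ bp]; rewrite /S /C /=.
  have [u uE] : exists u, u = (p - x) *m A by eexists.
  rewrite -uE.
  have nu : enorm u <= dl t / 2.
    rewrite uE rot_enorm //.
    have -> : dl t / 2 = n.+1%:R * (dl t / (2 * k)) by rewrite -kE; field; rewrite gt_eqF.
    apply: enorm_le; first by apply: divr_ge0; [exact: ltW| lra].
    by move=> j; rewrite !mxE distrC; apply: ltW; exact: bp.
  have cu := fun j => le_trans (coord_le_enorm u j) nu.
  split.
    by move=> j _; apply: le_lt_trans (cu j) _; lra.
  by have := cu ord_max; rewrite ler_norml => /andP[]; lra.
- move=> W /nbhs_ballP [rho rho0 sub].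
  have [m mE] : exists m : R, m = Num.min rho (Num.min eps h) by eexists.
  have m0 : 0 < m by rewrite mE !lt_min rho0 e0 h0.
  have mr : m <= rho by rewrite mE ge_min lexx.
  have me : m <= eps by rewrite mE !ge_min lexx orbT.
  have mh : m <= h by rewrite mE !ge_min lexx !orbT.
  have [t tE] : exists t : R, t = m / (4 * k) by eexists.
  have t0 : 0 < t by rewrite tE; apply: divr_gt0 => //; lra.
  have kt : k * t = m / 4 by rewrite tE; field; rewrite gt_eqF.
  have tkt : t <= k * t by rewrite ler_peMl // ltW.
  exists (S t); first by exists t; split => //; split; lra.
  move=> p Sp; apply: sub; apply/ballE; split => // i j; rewrite (ord1 i).
  have := coord_le_enorm (p - x) j.
  rewrite -(rot_enorm _ oA) => /le_trans /(_ (vbound _ _ t0 Sp)).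
  rewrite !mxE distrC; lra.
- move=> U [t [t0 [t2h teps]] <-].
  have [d0 dt dr dM] := dl_facts t t0.
  have xcl : closure (interior X) x by rewrite -XE.
  have xin : eball x eps x by rewrite /eball /= subrr enorm0.
  pose c := x + act_mx A (t *: e).
  apply: (@star_connected _ _ c) => p [Sp ip].
  have [v vE] : exists v, v = (p - x) *m A by eexists.
  have Cv : C t v by rewrite vE.
  have [Cj [Cl Cu]] := Cv.
  have [vd vdE] : exists vd, vd = v ord0 ord_max by eexists.
  rewrite -vdE in Cl Cu.
  have [s sE] : exists s, s = t - vd by eexists.
  have [v2 v2E] : exists v2, v2 = v - vd *: e by eexists.
  have pE : p = x + act_mx A v by rewrite vE -rot_pE.
  have qeq : p + act_mx A (s *: e) = c + act_mx A v2.
    rewrite pE /c -!addrA -!act_add; congr (x + act_mx A _).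
    apply/rowP => j; rewrite v2E sE !mxE; ring.
  have penorm : eball x eps p.
    rewrite /eball /= pE addrAC subrr add0r enorm_act //.
    by apply: le_lt_trans (vbound _ _ t0 Cv) teps.
  exists (sg p (act_mx A (s *: e)) `|` sg c (act_mx A v2)); split.
  + apply: connectedU; try exact: sg_connected.
    exists (p + act_mx A (s *: e)); split; first exact: sg_b.
    by rewrite qeq; exact: sg_b.
  + move=> z [[l]|[l]]; rewrite /= in_itv /= => /andP[l0 l1] <-.
    * rewrite act_scale scalerA; split.
        rewrite /S /= rot_coord // -vE; split.
          by move=> j jn; rewrite !mxE (negbTE jn) !mulr0 addr0; exact: Cj.
        rewrite !mxE eqxx mulr1 -vdE.
        have : l * s <= s by rewrite ler_piMl // sE; lra.
        have : 0 <= l * s by rewrite mulr_ge0 // sE; lra.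
        split; lra.
      have ls0 : 0 <= l * s by rewrite mulr_ge0 // sE; lra.
      have lss : l * s <= s by rewrite ler_piMl // sE; lra.
      case: (eqVneq (l * s) 0) => [->|lsn0].
        by rewrite scale0r act0 addr0.
      apply: (Hc p); first by split => //; exact: subset_closure.
      exists ((l * s) *: e) => //.
      apply: cusp_vert => //.
        by rewrite lt_neqAle eq_sym lsn0.
      lra.
    * rewrite act_scale /c -addrA -act_add; split.
        rewrite /S /= rot_coord // subrr mul0mx add0r; split.
          move=> j jn; rewrite v2E !mxE (negbTE jn) !mulr0 subr0 add0r.
          rewrite normrM ger0_norm //; apply: le_lt_trans (Cj j jn).
          by rewrite ler_piMl.
        rewrite v2E !mxE eqxx -vdE !mulr1 subrr mulr0 addr0.
        split; lra.
      apply: (Hc x); first by split.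
      exists (t *: e + l *: v2) => //.
      apply: (@cusp_top _ _ alpha r h t (dl t)) => //.
        lra.
        exact: ltW.
        by rewrite -kE.
        by rewrite -kE.
        by rewrite /xlast v2E !mxE eqxx -vdE !mulr1 subrr mulr0 addr0.
      move=> j jn; rewrite v2E !mxE (negbTE jn) !mulr0 subr0 add0r.
      rewrite normrM ger0_norm //; apply: ltW; apply: le_lt_trans (Cj j jn).
      by rewrite ler_piMl.
  + by left; exact: sg_a.
  + by right; exact: sg_a.
Qed.

Theorem proposition3p9 (R : realType) (n : nat) (X : set 'rV[R]_n.+1) :
  holder_set X -> simple_set X.
Proof.
move=> [_ XE _ [alpha [/andP[a0 _] ucp]]] x Xx.
have [xi|nxi] := pselect (interior X x).
  exact: interior_case.
exact: (@boundary_case R n X x alpha).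
Qed.
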